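(* For every $A\in\mathrm{Sym}(\mathbb R^{n+1})\setminus\mathcal S$, we have $\det(I_n+\sqrt{-1}A)\neq 0$ and $$\mathrm{Re}\left(\frac{\det(I_n+\sqrt{-1}A)}{\det(I+\sqrt{-1}A^+)}\right)\ge 0,$$ i.e. $\Theta(A)-\theta(A^+)\in[-\pi/2,\pi/2]\subset S^1=\mathbb R/2\pi\mathbb Z$, where $\Theta(A)=\arg\det(I_n+\sqrt{-1}A)$ and $\theta(A^+)=\arg\det(I+\sqrt{-1}A^+)$ modulo $2\pi$.
   Context: $I_n=\mathrm{diag}(0,1,\dots,1)\in\mathrm{Sym}(\mathbb R^{n+1})$, $I$ is the $n\times n$ identity. For $A=[a_{ij}]_{i,j=0}^n$, $A^+=[a_{ij}]_{i,j=1}^n$. $\mathcal S=\{A: A=\mathrm{diag}(0,A^+)\}$. *)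

(* Defs.v *)
(* Complex numbers are modelled by an arbitrary
   numClosedFieldType C (e.g. algC); "real matrices" are matrices over C
   whose entries are all real (Num.real). *)
From HB Require Import structures.
From mathcomp Require Import all_boot all_order all_algebra.
Set Implicit Arguments. Unset Strict Implicit. Unset Printing Implicit Defensive.
Import Order.TTheory GRing.Theory Num.Theory.
Local Open Scope ring_scope.

Definition real_mx (C : numClosedFieldType) m n (A : 'M[C]_(m, n)) : Prop :=
  forall i j, A i j \is Num.real.

Definition sym_real (C : numClosedFieldType) n (A : 'M[C]_n) : Prop :=
  real_mx A /\ A^T = A.

Definition In_mx (C : numClosedFieldType) n : 'M[C]_(n.+1) :=
  \matrix_(i, j) ((i == j) && (i != ord0))%:R.

Definition plus_mx (C : numClosedFieldType) n (A : 'M[C]_(n.+1)) : 'M[C]_n :=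
  \matrix_(i, j) A (lift ord0 i) (lift ord0 j).

Definition in_S (C : numClosedFieldType) n (A : 'M[C]_(n.+1)) : Prop :=
  A = \matrix_(i, j) (if (i == ord0) || (j == ord0) then 0 else A i j).

(* Main.v *)
Require Import Defs.
From HB Require Import structures.
From mathcomp Require Import all_boot all_order all_algebra.
Import Order.TTheory GRing.Theory Num.Theory.
Local Open Scope ring_scope.

Lemma schur_det (R : comUnitRingType) n (a : 'M[R]_1) (u : 'M[R]_(1,n))
  (v : 'M[R]_(n,1)) (M : 'M[R]_n) : M \in unitmx ->
  \det (block_mx a u v M) = \det (a - u *m invmx M *m v) * \det M.
Proof.
move=> uM.
have -> : block_mx a u v M = block_mx 1%:M (u *m invmx M) 0 1%:M *m
     block_mx (a - u *m invmx M *m v) 0 v M.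
  rewrite mulmx_block ?mul1mx ?mul0mx ?mulmx0 ?add0r ?addr0.
  by rewrite -[u *m invmx M *m M]mulmxA mulVmx // mulmx1 subrK.
by rewrite det_mulmx det_ublock det_lblock !det1 !mul1r.
Qed.
Lemma key (C : numClosedFieldType) n (B : 'M[C]_n) (x : 'rV[C]_n) :
  real_mx B -> B^T = B ->
  'Re (\sum_j (x 0 j)^* * (x *m (1%:M + 'i *: B)) 0 j) = \sum_j x 0 j * (x 0 j)^*.
Proof.
move=> rB sB.
have -> : \sum_j (x 0 j)^* * (x *m (1%:M + 'i *: B)) 0 j =
  \sum_j x 0 j * (x 0 j)^* + 'i * \sum_j (x 0 j)^* * (x *m B) 0 j.
  rewrite mulr_sumr -big_split /=; apply: eq_bigr => j _.
  rewrite mulmxDr mul_mx_scalar -scalemxAr !mxE mulrDr mulrC; congr (_ + _); first by rewrite mul1r.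
  by rewrite mulrCA.
rewrite Re_rect //.
  by apply: ger0_real; apply: sumr_ge0 => j _; exact: mul_conjC_ge0.
apply/CrealP.
rewrite rmorph_sum /=.
under eq_bigr => j _ do rewrite rmorphM /= conjCK !mxE rmorph_sum mulr_sumr.
under [RHS]eq_bigr => j _ do rewrite !mxE mulr_sumr.
rewrite exchange_big /=; apply: eq_bigr => k _; apply: eq_bigr => j _.
rewrite rmorphM /= (CrealP (rB k j)).
have -> : B j k = B k j by rewrite -[in LHS]sB mxE.
by rewrite mulrCA mulrA.
Qed.

Theorem lemma3p4 (C : numClosedFieldType) (n : nat) (A : 'M[C]_(n.+1)) :
  sym_real A -> ~ in_S A ->
  \det (In_mx C n + 'i *: A) != 0 /\
  0 <= 'Re (\det (In_mx C n + 'i *: A) / \det (1%:M + 'i *: plus_mx A)).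
Proof.
move=> [rA sA] nS.
have aSym : forall i j, A j i = A i j by move=> i j; rewrite -[in LHS]sA mxE.
have rP : real_mx (plus_mx A) by move=> i j; rewrite mxE.
have sP : (plus_mx A)^T = plus_mx A.
  by apply/matrixP => i j; rewrite !mxE aSym.
set b : 'rV[C]_n := \row_j A 0 (lift 0 j).
set M := 1%:M + 'i *: plus_mx A.
have dM : \det M != 0.
  apply/negP => /det0P [v v0 vM].
  have := @key C n (plus_mx A) v rP sP; rewrite -/M vM big1 => [|j _]; last by rewrite mxE mulr0.
  rewrite raddf0 => /esym /eqP; rewrite psumr_eq0 => [|j _]; last exact: mul_conjC_ge0.
  move=> /allP h; move/negP: v0; apply; apply/eqP/matrixP => i j.
  rewrite (ord1 i) mxE; have := h j (mem_index_enum j).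
  by rewrite mul_conjC_eq0 => /eqP.
have uM : M \in unitmx by rewrite unitmxE unitfE.
set x := b *m invmx M.
have xM : x *m M = b by rewrite /x -mulmxA mulVmx // mulmx1.
set r := 'i * A 0 0 + \sum_j x 0 j * b 0 j.
have eN : \det (In_mx C n + 'i *: A) = r * \det M.
  have -> : (In_mx C n + 'i *: A) = block_mx ('i * A 0 0)%:M ('i *: b) ('i *: b^T) M :> 'M_(1+n).
    apply/matrixP => i j.
    have l0 : (ord0 : 'I_(n.+1)) = lshift n (ord0 : 'I_1) by apply/val_inj.
    have lS : forall k : 'I_n, lift ord0 k = rshift 1 k by move=> k; apply/val_inj.
    have nl : forall k : 'I_n, (lift ord0 k == ord0) = false.
      by move=> k; apply/negbTE; rewrite eq_sym neq_lift.
    case: (unliftP ord0 i) => [i'|] -> ; case: (unliftP ord0 j) => [j'|] ->;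
      rewrite ?[in RHS](lS i') ?[in RHS](lS j') ?[in RHS]l0.
    - by rewrite block_mxEdr !mxE nl andbT (inj_eq lift_inj).
    - by rewrite block_mxEdl !mxE nl /= ?mulr0n add0r aSym.
    - by rewrite block_mxEur !mxE eqxx andbF add0r.
    - by rewrite block_mxEul !mxE eqxx andbF add0r mulr1n.
  rewrite schur_det // det_mx11; congr (_ * _).
  rewrite -!scalemxAl -scalemxAr !mxE eqxx mulr1n mulrA -expr2 sqrCi mulN1r opprK.
  rewrite /r; congr (_ + _); apply: eq_bigr => j _; by rewrite !mxE.
have Rr : 'Re r = \sum_j x 0 j * (x 0 j)^*.
  rewrite /r raddfD /= ReMil (Creal_ImP _ (rA 0 0)) oppr0 add0r -Re_conj rmorph_sum /=.
  rewrite -(@key C n (plus_mx A) x rP sP) -/M xM; congr (Re _); apply: eq_bigr => j _.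
  by rewrite rmorphM /=; congr (_ * _); rewrite mxE; apply/CrealP/rA.
have ge : 0 <= \sum_j x 0 j * (x 0 j)^*.
  by apply: sumr_ge0 => j _; exact: mul_conjC_ge0.
split; last by rewrite eN mulfK // Rr.
rewrite eN mulf_neq0 //; apply/eqP => r0.
have /eqP := Rr; rewrite r0 raddf0 eq_sym psumr_eq0 => [|j _]; last exact: mul_conjC_ge0.
move=> /allP h.
have x0 : x = 0.
  apply/rowP => j; rewrite [RHS]mxE; have := h j (mem_index_enum j).
  by rewrite /= mul_conjC_eq0 => /eqP.
have b0 : b = 0 by rewrite -xM x0 mul0mx.
have a0 : A 0 0 = 0.
  move: r0; rewrite /r big1 => [|j _]; last by rewrite x0 mxE mul0r.
  by rewrite addr0 => /eqP; rewrite mulf_eq0 (negbTE (neq0Ci C)) /= => /eqP.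
have bj : forall j, A 0 (lift 0 j) = 0.
  by move=> j; have := congr1 (fun m : 'rV[C]_n => m 0 j) b0; rewrite /= !mxE.
apply: nS; apply/matrixP => i j; rewrite mxE.
have nl : forall k : 'I_n, (lift ord0 k == ord0) = false.
  by move=> k; apply/negbTE; rewrite eq_sym neq_lift.
case: (unliftP ord0 i) => [i'|] -> ; case: (unliftP ord0 j) => [j'|] ->.
- by rewrite !nl.
- by rewrite eqxx orbT aSym bj.
- by rewrite eqxx bj.
- by rewrite eqxx a0.
Qed.
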